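(* In Model A below, let $I:=-\inf_{t\in\mathbb{R}}\log\big(\varrho(1-\varrho)e^{t}+\tfrac12+\tfrac12(1-2\varrho+2\varrho^2)e^{-t}\big)$. Then $I>0$ and $$\lim_{d\to\infty,\ d\text{ odd}}\frac1d\log\mathbb{P}\big(\chi(w)=2\text{ under the $c$-segmentation rule with }c=1\big)=-I,$$ while for every sequence $c=c(d)$ with $c\mid d$, $c$ and $d/c$ odd, $c\to\infty$ and $c/d\to0$, $$\lim_{d\to\infty}\frac1d\log\mathbb{P}\big(\chi(w)=2\text{ under the $c$-segmentation rule}\big)=-\tfrac{I}{2}.$$
   Context: Segmentation rule. Let $d,c$ be positive integers with $c\mid d$. For $x\in\mathbb{R}^d$ and $1\le j\le c$ let $x_j\in\mathbb{R}^{d/c}$ denote its $j$-th block $(x_{(j-1)d/c+1},\dots,x_{jd/c})$, so that $x=x_1\circ\cdots\circ x_c$ (concatenation). Given dictionary words $w^1,\dots,w^K\in\mathbb{R}^d$ ($w^k$ representing class $k$) and a test word $w\in\mathbb{R}^d$, for each $j$ let $U_j\in\{1,\dots,K\}$ be an index $k$ minimizing the Euclidean distance $\|w_j-w^k_j\|$ in $\mathbb{R}^{d/c}$, chosen uniformly at random among all minimizers (independently of everything else). The $c$-segmentation rule assigns to $w$ the class $\chi(w)\in\operatorname{argmax}_k\#\{j:U_j=k\}$, chosen uniformly at random among all maximizers. The case $c=1$ is the Euclidean (nearest-neighbour) rule and $c=d$ is coordinate-by-coordinate comparison. Probabilities are over all random objects including tie-breaks. Model A. Fix $\varrho\in(0,\tfrac12)$.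 Let $m_1,m_2$ be independent and uniformly distributed on $\{-1,+1\}^d$. Let $Y^{(0)},Y^{(1)},Y^{(2)}$ be independent random vectors in $\{-1,+1\}^d$, independent of $m_1,m_2$, each with i.i.d. coordinates satisfying $\mathbb{P}(Y_i=1)=1-\varrho$, $\mathbb{P}(Y_i=-1)=\varrho$. Write $x\times y$ for the coordinatewise product. There are $K=2$ classes; the dictionary words are $w^1=Y^{(1)}\times m_1$ (class 1) and $w^2=Y^{(2)}\times m_2$ (class 2), and the test word is $w=Y^{(0)}\times m_1$ (true class 1). *)

(* Defs.v *)
From Stdlib Require Import Reals List Arith.
Import ListNotations.
Open Scope R_scope.

Definition sumR {A : Type} (f : A -> R) (l : list A) : R :=
  fold_right (fun a s => f a + s) 0 l.
Definition prodR {A : Type} (f : A -> R) (l : list A) : R :=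
  fold_right (fun a p => f a * p) 1 l.

Fixpoint words {A : Type} (l : list A) (n : nat) : list (list A) :=
  match n with
  | O => [[]]
  | S n' => flat_map (fun a => map (cons a) (words l n')) l
  end.

Definition sign_vectors (d : nat) : list (list R) := words [1; -1] d.

Definition cwprod (x y : list R) : list R :=
  map (fun p => fst p * snd p) (combine x y).

Definition eucl_dist (x y : list R) : R :=
  sqrt (sumR (fun p => (fst p - snd p) ^ 2) (combine x y)).

(** j-th block (1 <= j <= c) of x in R^d, a vector of R^(d/c). *)
Definition block (d c j : nat) (x : list R) : list R :=
  firstn (d / c) (skipn ((j - 1) * (d / c)) x).

(** Dictionary: list of words w^1..w^K (class k is nth (k-1)). *)
Definition dword (dict : list (list R)) (k : nat) : list R := nth (k - 1) dict [].

Definition classes (dict : list (list R)) : list nat := seq 1 (length dict).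

Definition is_nearest (dict : list (list R)) (d c j : nat) (w : list R) (k : nat) : bool :=
  forallb (fun k' =>
     if Rle_dec (eucl_dist (block d c j w) (block d c j (dword dict k)))
                (eucl_dist (block d c j w) (block d c j (dword dict k')))
     then true else false) (classes dict).

Definition nearest_set (dict : list (list R)) (d c j : nat) (w : list R) : list nat :=
  filter (is_nearest dict d c j w) (classes dict).

(** P(U_j = k): uniform among minimizers. *)
Definition prob_U (dict : list (list R)) (d c j : nat) (w : list R) (k : nat) : R :=
  if is_nearest dict d c j w k then / INR (length (nearest_set dict d c j w)) else 0.

Definition votes (u : list nat) (k : nat) : nat := count_occ Nat.eq_dec u k.

Definition is_winner (K : nat) (u : list nat) (k : nat) : bool :=
  forallb (fun k' => Nat.leb (votes u k') (votes u k)) (seq 1 K).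

Definition winners (K : nat) (u : list nat) : list nat := filter (is_winner K u) (seq 1 K).

(** P(chi = k | U = u): uniform among maximizers. *)
Definition prob_chi_given (K : nat) (u : list nat) (k : nat) : R :=
  if is_winner K u k then / INR (length (winners K u)) else 0.

(** P(chi(w) = k) under the c-segmentation rule (tie-breaks independent), for
    k in 1..K; dictionary and test word are fixed. *)
Definition seg_prob (dict : list (list R)) (d c : nat) (w : list R) (k : nat) : R :=
  sumR (fun u =>
          prodR (fun j => prob_U dict d c j w (nth (j - 1) u O)) (seq 1 c)
          * prob_chi_given (length dict) u k)
       (words (classes dict) c).

Definition noise_prob (rho : R) (y : list R) : R :=
  prodR (fun yi => if Req_EM_T yi 1 then 1 - rho else rho) y.

Definition modelA_error (rho : R) (d c : nat) : R :=
  let S := sign_vectors d in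
  sumR (fun m1 => sumR (fun m2 => sumR (fun y0 => sumR (fun y1 => sumR (fun y2 =>
     (1/2) ^ d * (1/2) ^ d * noise_prob rho y0 * noise_prob rho y1 * noise_prob rho y2
     * seg_prob [cwprod y1 m1; cwprod y2 m2] d c (cwprod y0 m1) 2
  ) S) S) S) S) S.

Definition is_inf (E : R -> Prop) (m : R) : Prop :=
  (forall x, E x -> m <= x) /\ (forall b, (forall x, E x -> b <= x) -> b <= m).

(* Main.v *)
Require Import Defs.
From Stdlib Require Import Reals List Arith Lra Lia FunctionalExtensionality Setoid Morphisms.
Import ListNotations.
Open Scope R_scope.


Lemma sumR_nil {A} (f : A -> R) : sumR f [] = 0. Proof. reflexivity. Qed.
Lemma sumR_cons {A} (f : A -> R) a l : sumR f (a :: l) = f a + sumR f l. Proof. reflexivity. Qed.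
Lemma sumR_app {A} (f : A -> R) l1 l2 : sumR f (l1 ++ l2) = sumR f l1 + sumR f l2.
Proof. induction l1; simpl; [ring| unfold sumR in *; simpl; rewrite IHl1; ring]. Qed.
Lemma sumR_map {A B} (f : B -> R) (g : A -> B) l : sumR f (map g l) = sumR (fun x => f (g x)) l.
Proof. induction l; simpl; auto. unfold sumR in *; simpl; rewrite IHl; ring. Qed.
Lemma sumR_ext_in {A} (f g : A -> R) l : (forall x, In x l -> f x = g x) -> sumR f l = sumR g l.
Proof. induction l; intros H; simpl; auto. unfold sumR in *; simpl. rewrite H by (left; auto). rewrite IHl; auto.
 intros; apply H; right; auto. Qed.
Lemma sumR_ext {A} (f g : A -> R) l : (forall x, f x = g x) -> sumR f l = sumR g l.
Proof. intros; apply sumR_ext_in; auto. Qed.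
Lemma sumR_plus {A} (f g : A -> R) l : sumR (fun x => f x + g x) l = sumR f l + sumR g l.
Proof. induction l; simpl; [ring|]. unfold sumR in *; simpl; rewrite IHl; ring. Qed.
Lemma sumR_scal {A} (f : A -> R) c l : sumR (fun x => c * f x) l = c * sumR f l.
Proof. induction l; simpl; [ring|]. unfold sumR in *; simpl; rewrite IHl; ring. Qed.
Lemma sumR_flat_map {A B} (f : B -> R) (g : A -> list B) l :
  sumR f (flat_map g l) = sumR (fun x => sumR f (g x)) l.
Proof. induction l; simpl; auto. rewrite sumR_app, IHl. reflexivity. Qed.
Lemma sumR_nonneg {A} (f : A -> R) l : (forall x, In x l -> 0 <= f x) -> 0 <= sumR f l.
Proof. induction l; simpl; intros; [lra|]. unfold sumR in *; simpl.
 assert (0 <= f a) by (apply H; auto). assert (0 <= fold_right (fun a s => f a + s) 0 l) by (apply IHl; auto). lra. Qed.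
Lemma sumR_le {A} (f g : A -> R) l : (forall x, In x l -> f x <= g x) -> sumR f l <= sumR g l.
Proof. induction l; simpl; intros; [lra|]. unfold sumR in *; simpl.
 assert (f a <= g a) by (apply H; auto). assert (fold_right (fun a s => f a + s) 0 l <= fold_right (fun a s => g a + s) 0 l) by (apply IHl; auto). lra. Qed.

Lemma prodR_ext_in {A} (f g : A -> R) l : (forall x, In x l -> f x = g x) -> prodR f l = prodR g l.
Proof. induction l; intros H; simpl; auto. unfold prodR in *; simpl. rewrite H by (left; auto). rewrite IHl; auto.
 intros; apply H; right; auto. Qed.
Lemma prodR_map {A B} (f : B -> R) (g : A -> B) l : prodR f (map g l) = prodR (fun x => f (g x)) l.
Proof. induction l; simpl; auto. unfold prodR in *; simpl; rewrite IHl; ring. Qed.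

Lemma words_S {A} (l : list A) n : words l (S n) = flat_map (fun a => map (cons a) (words l n)) l.
Proof. reflexivity. Qed.
Lemma sumR_words_S {A} (f : list A -> R) l n :
  sumR f (words l (S n)) = sumR (fun a => sumR (fun x => f (a :: x)) (words l n)) l.
Proof. rewrite words_S, sumR_flat_map. apply sumR_ext; intro; apply sumR_map. Qed.
Lemma words_length {A} (l : list A) n x : In x (words l n) -> length x = n.
Proof. revert x; induction n; simpl; intros x H.
 - destruct H as [<-|[]]; auto.
 - apply in_flat_map in H. destruct H as [a [_ H]]. apply in_map_iff in H. destruct H as [y [<- H]].
   simpl; f_equal; auto. Qed.

Instance sumR_Proper {A} : Proper (pointwise_relation A eq ==> eq ==> eq) (@sumR A).
Proof. intros f g H l l' <-. apply sumR_ext; auto. Qed.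


Definition E1 n (f : list R -> R) := sumR (fun m => (1/2)^n * f m) (sign_vectors n).
Definition EN rho n (f : list R -> R) := sumR (fun y => noise_prob rho y * f y) (sign_vectors n).
Definition Ebig rho n (F : list R -> list R -> list R -> list R -> list R -> R) :=
  E1 n (fun m1 => E1 n (fun m2 => EN rho n (fun y0 => EN rho n (fun y1 => EN rho n (fun y2 =>
     F m1 m2 y0 y1 y2))))).

Instance E1_Proper n : Proper (pointwise_relation _ eq ==> eq) (E1 n).
Proof. intros f g H. unfold E1. apply sumR_ext; intro; rewrite H; auto. Qed.
Instance EN_Proper rho n : Proper (pointwise_relation _ eq ==> eq) (EN rho n).
Proof. intros f g H. unfold EN. apply sumR_ext; intro; rewrite H; auto. Qed.

Lemma E1_ext_in n f g : (forall m, length m = n -> f m = g m) -> E1 n f = E1 n g.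
Proof. intros H; unfold E1; apply sumR_ext_in; intros x Hx. rewrite H; auto. eapply words_length; eauto. Qed.
Lemma EN_ext_in rho n f g : (forall m, length m = n -> f m = g m) -> EN rho n f = EN rho n g.
Proof. intros H; unfold EN; apply sumR_ext_in; intros x Hx. rewrite H; auto. eapply words_length; eauto. Qed.

Lemma E1_lin n c1 c2 f g : E1 n (fun x => c1 * f x + c2 * g x) = c1 * E1 n f + c2 * E1 n g.
Proof. unfold E1. rewrite <- !sumR_scal, <- sumR_plus. apply sumR_ext; intro; ring. Qed.
Lemma EN_lin rho n c1 c2 f g : EN rho n (fun x => c1 * f x + c2 * g x) = c1 * EN rho n f + c2 * EN rho n g.
Proof. unfold EN. rewrite <- !sumR_scal, <- sumR_plus. apply sumR_ext; intro; ring. Qed.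

Lemma E1_step n f : E1 (S n) f = 1/2 * E1 n (fun m => f (1::m)) + 1/2 * E1 n (fun m => f (-1::m)).
Proof. unfold E1, sign_vectors. rewrite sumR_words_S, !sumR_cons, sumR_nil.
 rewrite Rplus_0_r, <- !sumR_scal, <- !sumR_plus. apply sumR_ext; intro; simpl; ring. Qed.

Lemma nu1 rho : (if Req_EM_T 1 1 then 1 - rho else rho) = 1 - rho.
Proof. destruct Req_EM_T; lra. Qed.
Lemma num1 rho : (if Req_EM_T (-1) 1 then 1 - rho else rho) = rho.
Proof. destruct Req_EM_T; lra. Qed.

Lemma EN_step rho n f : EN rho (S n) f = (1 - rho) * EN rho n (fun m => f (1::m)) + rho * EN rho n (fun m => f (-1::m)).
Proof. unfold EN, sign_vectors. rewrite sumR_words_S, !sumR_cons, sumR_nil.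
 rewrite Rplus_0_r, <- !sumR_scal, <- !sumR_plus. apply sumR_ext; intro; unfold noise_prob, prodR; simpl.
 rewrite nu1, num1. ring. Qed.

Definition B1 (g : R -> R) := 1/2 * g 1 + 1/2 * g (-1).
Definition BN rho (g : R -> R) := (1 - rho) * g 1 + rho * g (-1).
Definition Step rho (G : R -> R -> R -> R -> R -> R) :=
  B1 (fun a1 => B1 (fun a2 => BN rho (fun b0 => BN rho (fun b1 => BN rho (fun b2 => G a1 a2 b0 b1 b2))))).

Lemma Ebig_step rho n F : Ebig rho (S n) F =
  Step rho (fun a1 a2 b0 b1 b2 => Ebig rho n (fun m1 m2 y0 y1 y2 => F (a1::m1) (a2::m2) (b0::y0) (b1::y1) (b2::y2))).
Proof.
 unfold Ebig, Step, B1, BN.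
 repeat (first [setoid_rewrite E1_lin | setoid_rewrite EN_lin | setoid_rewrite E1_step | setoid_rewrite EN_step]).
 reflexivity.
Qed.

Lemma Step_ext rho G H : (forall a1 a2 b0 b1 b2, G a1 a2 b0 b1 b2 = H a1 a2 b0 b1 b2) -> Step rho G = Step rho H.
Proof. intros E; unfold Step, B1, BN; rewrite !E; reflexivity. Qed.

Lemma E1_0 f : E1 0 f = f []. Proof. unfold E1; simpl. unfold sumR; simpl. ring. Qed.
Lemma EN_0 rho f : EN rho 0 f = f []. Proof. unfold EN; simpl. unfold sumR, noise_prob, prodR; simpl. ring. Qed.
Lemma Ebig_0 rho F : Ebig rho 0 F = F [] [] [] [] [].
Proof. unfold Ebig. rewrite !E1_0, !EN_0. reflexivity. Qed.

Lemma Ebig_split rho b n F : Ebig rho (b + n) F =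
  Ebig rho b (fun x1 x2 x3 x4 x5 => Ebig rho n (fun y1 y2 y3 y4 y5 => F (x1++y1) (x2++y2) (x3++y3) (x4++y4) (x5++y5))).
Proof.
 revert F; induction b; intros F.
 - rewrite Ebig_0. reflexivity.
 - simpl plus. rewrite !Ebig_step. apply Step_ext. intros. rewrite IHb. reflexivity.
Qed.

Lemma Ebig_lin rho n c1 c2 F G : Ebig rho n (fun m1 m2 y0 y1 y2 => c1 * F m1 m2 y0 y1 y2 + c2 * G m1 m2 y0 y1 y2)
  = c1 * Ebig rho n F + c2 * Ebig rho n G.
Proof. unfold Ebig. repeat (first [setoid_rewrite E1_lin | setoid_rewrite EN_lin]). reflexivity. Qed.




Lemma Ebig_const rho n k : Ebig rho n (fun _ _ _ _ _ => k) = k.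
Proof. induction n. - rewrite Ebig_0; auto. - rewrite Ebig_step. unfold Step, B1, BN. cbv beta. rewrite !IHn. field. Qed.

Lemma Ebig_ext_in rho n F G : (forall m1 m2 y0 y1 y2, length m1 = n -> length m2 = n -> length y0 = n ->
   length y1 = n -> length y2 = n -> F m1 m2 y0 y1 y2 = G m1 m2 y0 y1 y2) -> Ebig rho n F = Ebig rho n G.
Proof. intros H; unfold Ebig. apply E1_ext_in; intros. apply E1_ext_in; intros. apply EN_ext_in; intros.
 apply EN_ext_in; intros. apply EN_ext_in; intros. auto. Qed.

Lemma modelA_Ebig rho d c : modelA_error rho d c =
  Ebig rho d (fun m1 m2 y0 y1 y2 => seg_prob [cwprod y1 m1; cwprod y2 m2] d c (cwprod y0 m1) 2).
Proof.
 unfold modelA_error, Ebig, E1, EN.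
 do 5 (repeat rewrite <- sumR_scal; apply sumR_ext; intro). ring.
Qed.


Definition pu (D1 D2 : R) (k : nat) : R :=
  match k with
  | 1%nat => if Rlt_dec D1 D2 then 1 else if Req_EM_T D1 D2 then 1/2 else 0
  | 2%nat => if Rlt_dec D2 D1 then 1 else if Req_EM_T D1 D2 then 1/2 else 0
  | _ => 0 end.

Lemma pu_sum D1 D2 : pu D1 D2 1 + pu D1 D2 2 = 1.
Proof. unfold pu. destruct (Rlt_dec D1 D2), (Rlt_dec D2 D1), (Req_EM_T D1 D2); lra. Qed.

Lemma prob_U_pu W1 W2 d c j W k : (k = 1 \/ k = 2)%nat ->
  prob_U [W1;W2] d c j W k =
  pu (eucl_dist (block d c j W) (block d c j W1)) (eucl_dist (block d c j W) (block d c j W2)) k.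
Proof.
 intros Hk. unfold prob_U, nearest_set, is_nearest, classes, dword. simpl.
 set (D1 := eucl_dist (block d c j W) (block d c j W1)).
 set (D2 := eucl_dist (block d c j W) (block d c j W2)).
 destruct Hk as [-> | ->]; simpl; fold D1; fold D2; unfold pu;
 destruct (Rle_dec D1 D1), (Rle_dec D1 D2), (Rle_dec D2 D1), (Rle_dec D2 D2), (Rlt_dec D1 D2), (Rlt_dec D2 D1), (Req_EM_T D1 D2);
 simpl; try lra.
Qed.

Definition chi2 (a b : nat) : R := if Nat.ltb a b then 1 else if Nat.eqb a b then 1/2 else 0.

Lemma prob_chi_chi2 u : prob_chi_given 2 u 2 = chi2 (votes u 1) (votes u 2).
Proof.
 unfold prob_chi_given, winners, is_winner, chi2. simpl.
 rewrite Nat.leb_refl. simpl.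
 destruct (Nat.ltb_spec (votes u 1) (votes u 2)), (Nat.eqb_spec (votes u 1) (votes u 2));
 destruct (Nat.leb_spec (votes u 1) (votes u 2)), (Nat.leb_spec (votes u 2) (votes u 1)); simpl; rewrite ?Nat.leb_refl; simpl; try lia; try lra.
Qed.

Lemma block_first b c x y : length x = b -> block (b * S c) (S c) 1 (x ++ y) = x.
Proof.
 intros Hx. unfold block. rewrite Nat.div_mul by lia. simpl skipn.
 rewrite firstn_app. rewrite Hx, Nat.sub_diag. simpl. rewrite app_nil_r. rewrite <- Hx. apply firstn_all.
Qed.

Lemma block_next b c j x y : length x = b -> (1 <= j <= c)%nat ->
  block (b * S c) (S c) (S j) (x ++ y) = block (b * c) c j y.
Proof.
 intros Hx Hj. unfold block. rewrite Nat.div_mul by lia. rewrite Nat.div_mul by lia.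
 rewrite skipn_app. rewrite skipn_all2 by (rewrite Hx; nia). simpl app.
 f_equal. f_equal. rewrite Hx. nia.
Qed.

Lemma cwprod_app a a' m m' : length a = length m -> cwprod (a ++ a') (m ++ m') = cwprod a m ++ cwprod a' m'.
Proof.
 revert m; induction a; intros m H; destruct m; simpl in *; try discriminate; auto.
 unfold cwprod in *; simpl. f_equal. apply IHa. lia.
Qed.

Lemma cwprod_length a m : length a = length m -> length (cwprod a m) = length a.
Proof. intros H. unfold cwprod. rewrite length_map, length_combine. lia. Qed.

Definition Gv (b c : nat) (w w1 w2 : list R) (psi : nat -> nat -> R) : R :=
  sumR (fun u => prodR (fun j => prob_U [w1;w2] (b*c) c j w (nth (j-1) u 0%nat)) (seq 1 c)
                 * psi (votes u 1) (votes u 2)) (words [1%nat;2%nat] c).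

Lemma words_nth_in (l : list nat) c u i : In u (words l c) -> (i < c)%nat -> In (nth i u 0%nat) l.
Proof.
 revert u i; induction c; intros u i Hu Hi; [lia|].
 rewrite words_S in Hu. apply in_flat_map in Hu. destruct Hu as [a [Ha Hu]].
 apply in_map_iff in Hu. destruct Hu as [u' [<- Hu']]. destruct i; simpl; auto. apply IHc; auto; lia.
Qed.

Lemma prodR_seq_S f c : prodR f (seq 1 (S c)) = f 1%nat * prodR (fun j => f (S j)) (seq 1 c).
Proof. change (prodR f (seq 1 (S c))) with (f 1%nat * prodR f (seq 2 c)). rewrite <- (seq_shift c 1), prodR_map. reflexivity. Qed.

Lemma G_step b c x x1 x2 y y1 y2 psi : length x = b -> length x1 = b -> length x2 = b ->
  Gv b (S c) (x ++ y) (x1 ++ y1) (x2 ++ y2) psi =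
  pu (eucl_dist x x1) (eucl_dist x x2) 1 * Gv b c y y1 y2 (fun a v => psi (S a) v) +
  pu (eucl_dist x x1) (eucl_dist x x2) 2 * Gv b c y y1 y2 (fun a v => psi a (S v)).
Proof.
 intros Hx Hx1 Hx2. unfold Gv. rewrite sumR_words_S, !sumR_cons, sumR_nil, Rplus_0_r.
 rewrite <- !sumR_scal. f_equal.
 - apply sumR_ext_in; intros u Hu.
   rewrite prodR_seq_S.
   rewrite prob_U_pu by auto. rewrite !block_first by auto.
   rewrite (prodR_ext_in _ (fun j => prob_U [y1; y2] (b * c) c j y (nth (j - 1) u 0%nat))).
   + change (nth (1 - 1) (1%nat :: u) 0%nat) with 1%nat. unfold votes. rewrite count_occ_cons_eq, count_occ_cons_neq by lia. ring.
   + intros j Hj. apply in_seq in Hj. replace (S j - 1)%nat with (S (j-1)) by lia. simpl nth.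
     assert (Hk: In (nth (j-1) u 0%nat) [1%nat;2%nat]) by (apply (words_nth_in _ c); auto; lia).
     assert (Hk' : (nth (j-1) u 0%nat = 1 \/ nth (j-1) u 0%nat = 2)%nat) by (simpl in Hk; destruct Hk as [<-|[<-|[]]]; auto).
     rewrite !prob_U_pu by auto. rewrite !block_next by (auto; lia). reflexivity.
 - apply sumR_ext_in; intros u Hu.
   rewrite prodR_seq_S.
   rewrite prob_U_pu by auto. rewrite !block_first by auto.
   rewrite (prodR_ext_in _ (fun j => prob_U [y1; y2] (b * c) c j y (nth (j - 1) u 0%nat))).
   + change (nth (1 - 1) (2%nat :: u) 0%nat) with 2%nat. unfold votes. rewrite count_occ_cons_neq, count_occ_cons_eq by lia. ring.
   + intros j Hj. apply in_seq in Hj. replace (S j - 1)%nat with (S (j-1)) by lia. simpl nth.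
     assert (Hk: In (nth (j-1) u 0%nat) [1%nat;2%nat]) by (apply (words_nth_in _ c); auto; lia).
     assert (Hk' : (nth (j-1) u 0%nat = 1 \/ nth (j-1) u 0%nat = 2)%nat) by (simpl in Hk; destruct Hk as [<-|[<-|[]]]; auto).
     rewrite !prob_U_pu by auto. rewrite !block_next by (auto; lia). reflexivity.
Qed.


Fixpoint Vt (q : R) (c : nat) (psi : nat -> nat -> R) : R :=
  match c with
  | O => psi O O
  | S c => (1 - q) * Vt q c (fun a v => psi (S a) v) + q * Vt q c (fun a v => psi a (S v))
  end.

Definition qb rho b := Ebig rho b (fun m1 m2 y0 y1 y2 =>
   pu (eucl_dist (cwprod y0 m1) (cwprod y1 m1)) (eucl_dist (cwprod y0 m1) (cwprod y2 m2)) 2).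

Lemma A_rec rho b c : forall psi,
  Ebig rho (b*c) (fun m1 m2 y0 y1 y2 => Gv b c (cwprod y0 m1) (cwprod y1 m1) (cwprod y2 m2) psi)
  = Vt (qb rho b) c psi.
Proof.
 induction c; intros psi.
 - rewrite Nat.mul_0_r, Ebig_0. unfold Gv. simpl. unfold sumR, prodR, votes. simpl. ring.
 - replace (b * S c)%nat with (b + b * c)%nat by lia. rewrite Ebig_split.
   transitivity (Ebig rho b (fun x1 x2 x3 x4 x5 =>
      Vt (qb rho b) c (fun a v => psi (S a) v) * pu (eucl_dist (cwprod x3 x1) (cwprod x4 x1)) (eucl_dist (cwprod x3 x1) (cwprod x5 x2)) 1
    + Vt (qb rho b) c (fun a v => psi a (S v)) * pu (eucl_dist (cwprod x3 x1) (cwprod x4 x1)) (eucl_dist (cwprod x3 x1) (cwprod x5 x2)) 2)).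
   + apply Ebig_ext_in. intros x1 x2 x3 x4 x5 L1 L2 L3 L4 L5.
     rewrite <- !IHc. rewrite !(Rmult_comm (Ebig _ _ _)). rewrite <- Ebig_lin.
     replace (b * S c)%nat with (b + b * c)%nat by lia.
     apply Ebig_ext_in. intros y1 y2 y3 y4 y5 _ _ _ _ _.
     rewrite !cwprod_app by lia.
     rewrite G_step by (rewrite cwprod_length; lia). ring.
   + rewrite Ebig_lin. simpl Vt.
     replace (Ebig rho b (fun x1 x2 x3 x4 x5 => pu (eucl_dist (cwprod x3 x1) (cwprod x4 x1)) (eucl_dist (cwprod x3 x1) (cwprod x5 x2)) 1))
       with (Ebig rho b (fun x1 x2 x3 x4 x5 => 1 * 1 + (-1) * pu (eucl_dist (cwprod x3 x1) (cwprod x4 x1)) (eucl_dist (cwprod x3 x1) (cwprod x5 x2)) 2)).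
     * rewrite Ebig_lin, Ebig_const. unfold qb. ring.
     * apply Ebig_ext_in; intros. pose proof (pu_sum (eucl_dist (cwprod y0 m1) (cwprod y1 m1)) (eucl_dist (cwprod y0 m1) (cwprod y2 m2))). lra.
Qed.

Lemma modelA_Vt rho b c : (c <> 0)%nat -> modelA_error rho (b * c) c = Vt (qb rho b) c chi2.
Proof.
 intros Hc. rewrite modelA_Ebig, <- A_rec. apply Ebig_ext_in; intros.
 unfold seg_prob, Gv. apply sumR_ext; intro u. rewrite prob_chi_chi2. reflexivity.
Qed.


Fixpoint W (a z b : R) (n : nat) (phi : R -> R) (x : R) : R :=
  match n with
  | O => phi x
  | S n => a * W a z b n phi (x + 1) + z * W a z b n phi x + b * W a z b n phi (x - 1)
  end.

Definition Sd (x y : list R) : R := sumR (fun p => (fst p - snd p) ^ 2) (combine x y).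
Lemma Sd_cons a x b y : Sd (a :: x) (b :: y) = (a - b) ^ 2 + Sd x y. Proof. reflexivity. Qed.
Lemma cwprod_cons a x b y : cwprod (a :: x) (b :: y) = a * b :: cwprod x y. Proof. reflexivity. Qed.

Definition Dl (a1 a2 b0 b1 b2 : R) := ((b0 * a1 - b1 * a1) ^ 2 - (b0 * a1 - b2 * a2) ^ 2) / 4.

Definition alpha rho := rho * (1 - rho).
Definition beta rho := 1/2 * (1 - 2 * rho + 2 * rho ^ 2).

Lemma Ebig_W rho n phi : forall x,
  Ebig rho n (fun m1 m2 y0 y1 y2 =>
     phi (x + (Sd (cwprod y0 m1) (cwprod y1 m1) - Sd (cwprod y0 m1) (cwprod y2 m2)) / 4))
  = W (alpha rho) (1/2) (beta rho) n phi x.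
Proof.
 induction n; intros x.
 - rewrite Ebig_0. simpl. f_equal. unfold Sd; simpl. unfold sumR; simpl. field.
 - rewrite Ebig_step.
   transitivity (Step rho (fun a1 a2 b0 b1 b2 => W (alpha rho) (1/2) (beta rho) n phi (x + Dl a1 a2 b0 b1 b2))).
   + apply Step_ext. intros. rewrite <- IHn. apply Ebig_ext_in; intros.
     rewrite !cwprod_cons, !Sd_cons. f_equal. unfold Dl. field.
   + unfold Step, B1, BN. cbv beta.
     repeat match goal with |- context [Dl ?a ?b ?c ?d ?e] =>
       first [ replace (Dl a b c d e) with 1 by (unfold Dl; field)
             | replace (Dl a b c d e) with 0 by (unfold Dl; field)
             | replace (Dl a b c d e) with (-1) by (unfold Dl; field) ] end.
     replace (x + 0) with x by ring. replace (x + -1) with (x - 1) by ring.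
     simpl W. unfold alpha, beta. field.
Qed.

Definition g (y : R) : R := if Rlt_dec 0 y then 1 else if Req_EM_T y 0 then 1/2 else 0.

Lemma Sd_nonneg x y : 0 <= Sd x y.
Proof. unfold Sd. apply sumR_nonneg. intros. apply pow2_ge_0. Qed.

Lemma pu2_g s1 s2 : 0 <= s1 -> 0 <= s2 -> pu (sqrt s1) (sqrt s2) 2 = g (0 + (s1 - s2) / 4).
Proof.
 intros H1 H2. unfold pu, g.
 destruct (Rlt_dec (sqrt s2) (sqrt s1)) as [Hl|Hl].
 - apply sqrt_lt_0_alt in Hl. destruct (Rlt_dec 0 (0 + (s1 - s2) / 4)); auto. lra.
 - destruct (Req_EM_T (sqrt s1) (sqrt s2)) as [He|He].
   + apply sqrt_inj in He; auto. subst. destruct (Rlt_dec 0 (0 + (s2 - s2) / 4)); [lra|].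
     destruct (Req_EM_T (0 + (s2 - s2) / 4) 0); auto. lra.
   + destruct (Rlt_dec 0 (0 + (s1 - s2) / 4)).
     * exfalso. apply Hl. apply sqrt_lt_1_alt. lra.
     * destruct (Req_EM_T (0 + (s1 - s2) / 4) 0); auto. exfalso. apply He. f_equal. lra.
Qed.

Lemma qb_W rho n : qb rho n = W (alpha rho) (1/2) (beta rho) n g 0.
Proof.
 rewrite <- Ebig_W. unfold qb. apply Ebig_ext_in; intros. unfold eucl_dist. fold (Sd (cwprod y0 m1) (cwprod y1 m1)).
 fold (Sd (cwprod y0 m1) (cwprod y2 m2)). apply pu2_g; apply Sd_nonneg.
Qed.


Lemma W_ext a z b n phi psi : (forall y, phi y = psi y) -> forall x, W a z b n phi x = W a z b n psi x.
Proof. intros H; induction n; intros x; simpl; auto. rewrite !IHn. auto. Qed.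

Lemma W_le a z b n phi psi : 0 <= a -> 0 <= z -> 0 <= b -> (forall y, phi y <= psi y) ->
  forall x, W a z b n phi x <= W a z b n psi x.
Proof. intros Ha Hz Hb H; induction n; intros x; simpl; auto.
 specialize (IHn (x+1)) as H1. specialize (IHn x) as H2. specialize (IHn (x-1)) as H3.
 apply Rplus_le_compat; [apply Rplus_le_compat|]; apply Rmult_le_compat_l; auto. Qed.

Lemma W_lin a z b n c1 c2 phi psi : forall x,
  W a z b n (fun y => c1 * phi y + c2 * psi y) x = c1 * W a z b n phi x + c2 * W a z b n psi x.
Proof. induction n; intros x; simpl; auto. rewrite !IHn. ring. Qed.

Lemma W_exp a z b t n : forall x,
  W a z b n (fun y => exp (t * y)) x = exp (t * x) * (a * exp t + z + b * exp (- t)) ^ n.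
Proof. induction n; intros x; simpl. ring. rewrite !IHn.
 replace (t * (x + 1)) with (t * x + t) by ring. replace (t * (x - 1)) with (t * x + - t) by ring.
 rewrite !exp_plus. ring. Qed.

Lemma W_tilt a z b t M n : M <> 0 -> forall phi x,
  W a z b n phi x = M ^ n * exp (t * x) *
     W (a * exp t / M) (z / M) (b * exp (- t) / M) n (fun y => exp (- t * y) * phi y) x.
Proof.
 intros HM. induction n; intros phi x; simpl.
 - replace (- t * x) with (- (t * x)) by ring. rewrite exp_Ropp. field. apply Rgt_not_eq, exp_pos.
 - rewrite !IHn.
   replace (t * (x + 1)) with (t * x + t) by ring. replace (t * (x - 1)) with (t * x + - t) by ring.
   rewrite !exp_plus. field. auto.
Qed.

Lemma W_one a z b n : forall x, W a z b n (fun _ => 1) x = (a + z + b) ^ n.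
Proof. induction n; intros x; simpl; auto. rewrite !IHn. ring. Qed.

Lemma W_sym s z n phi : forall x, W s z s n phi x = W s z s n (fun y => phi (- y)) (- x).
Proof. induction n; intros x; simpl.
 - rewrite Ropp_involutive; auto.
 - rewrite !IHn. replace (- (x + 1)) with (- x - 1) by ring. replace (- (x - 1)) with (- x + 1) by ring. ring.
Qed.

Lemma W_sq s n : forall x, W s (1 - 2 * s) s n (fun y => y ^ 2) x = x ^ 2 + 2 * s * INR n.
Proof. induction n; intros x; simpl W. simpl; ring. rewrite !IHn. rewrite S_INR. ring. Qed.

Definition win (K y : R) : R := if Rle_dec 0 y then (if Rle_dec y K then 1 else 0) else 0.
Definition ipos (y : R) : R := if Rle_dec 0 y then 1 else 0.

Lemma W_win s n K : 0 <= s <= 1/2 -> 0 < K ->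
  1/2 - INR n / K ^ 2 <= W s (1 - 2 * s) s n (win K) 0.
Proof.
 intros Hs HK.
 assert (Hz : 0 <= 1 - 2 * s) by lra.
 assert (Hp : 1/2 <= W s (1 - 2 * s) s n ipos 0).
 { assert (H1 : 1 <= W s (1 - 2*s) s n (fun y => 1 * ipos y + 1 * ipos (- y)) 0).
   { assert (E: W s (1-2*s) s n (fun _ => 1) 0 = 1) by (rewrite W_one; replace (s + (1-2*s) + s) with 1 by ring; apply pow1).
     apply Rle_trans with (W s (1-2*s) s n (fun _ => 1) 0); [rewrite E; lra|].
     apply W_le; try lra. intros y. unfold ipos.
     destruct (Rle_dec 0 y), (Rle_dec 0 (-y)); lra. }
   rewrite W_lin in H1. rewrite (W_sym s _ n (fun y => ipos (-y))) in H1.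
   rewrite (W_ext s _ s n (fun y => ipos (- - y)) ipos) in H1 by (intros; rewrite Ropp_involutive; auto).
   replace (-0) with 0 in H1 by ring. lra. }
 assert (Hq : W s (1 - 2*s) s n (fun y => 1 * ipos y + (- / K ^ 2) * y ^ 2) 0 <= W s (1 - 2 * s) s n (win K) 0).
 { apply W_le; try lra. intros y. unfold ipos, win.
   assert (0 < K^2) by (apply pow_lt; auto).
   assert (0 <= y ^ 2 / K^2) by (apply Rmult_le_pos; [apply pow2_ge_0|left; apply Rinv_0_lt_compat; auto]).
   destruct (Rle_dec 0 y), (Rle_dec y K).
   - assert (y ^ 2 / K ^2 >= 0) by lra. unfold Rdiv in *. lra.
   - assert (K ^ 2 < y ^ 2) by nra.
     assert (1 < y ^ 2 / K ^2). { apply (Rmult_lt_reg_r (K^2)); auto. unfold Rdiv; rewrite Rmult_assoc, Rinv_l by lra; lra. }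
     unfold Rdiv in *. lra.
   - unfold Rdiv in *. lra.
   - unfold Rdiv in *. lra. }
 rewrite W_lin, W_sq in Hq.
 assert (Hn : 2 * s * INR n <= INR n) by (assert (0 <= INR n) by apply pos_INR; nra).
 assert (0 < K^2) by (apply pow_lt; auto).
 assert (INR n / K^2 >= (0 ^ 2 + 2 * s * INR n) / K^2).
 { unfold Rdiv. apply Rle_ge. apply Rmult_le_compat_r. left; apply Rinv_0_lt_compat; auto. simpl; lra. }
 unfold Rdiv in *. lra.
Qed.


Lemma exp_mono x y : x <= y -> exp x <= exp y.
Proof. intros [H|H]. left; apply exp_increasing; auto. subst; lra. Qed.

Definition sa rho := sqrt (alpha rho).
Definition sb rho := sqrt (beta rho).
Definition Ms rho := 1/2 + 2 * (sa rho * sb rho).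
Definition ts rho := ln (sb rho / sa rho).


Lemma alpha_pos rho : 0 < rho < 1/2 -> 0 < alpha rho.
Proof. intros. unfold alpha. nra. Qed.
Lemma beta_gt rho : 0 < rho < 1/2 -> alpha rho < beta rho.
Proof. intros. unfold alpha, beta. nra. Qed.
Lemma sa_pos rho : 0 < rho < 1/2 -> 0 < sa rho.
Proof. intros. unfold sa. apply sqrt_lt_R0, alpha_pos; auto. Qed.
Lemma sa_lt_sb rho : 0 < rho < 1/2 -> sa rho < sb rho.
Proof. intros. unfold sa, sb. apply sqrt_lt_1_alt. split. left; apply alpha_pos; auto. apply beta_gt; auto. Qed.
Lemma sa_sq rho : 0 < rho < 1/2 -> sa rho * sa rho = alpha rho.
Proof. intros. unfold sa. apply sqrt_sqrt. left; apply alpha_pos; auto. Qed.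
Lemma sb_sq rho : 0 < rho < 1/2 -> sb rho * sb rho = beta rho.
Proof. intros. unfold sb. apply sqrt_sqrt. pose proof (alpha_pos rho H). pose proof (beta_gt rho H). lra. Qed.

Lemma Ms_bounds rho : 0 < rho < 1/2 -> 1/2 < Ms rho < 1.
Proof.
 intros H. pose proof (sa_pos rho H). pose proof (sa_lt_sb rho H). pose proof (sa_sq rho H). pose proof (sb_sq rho H).
 unfold Ms. split. nra.
 assert (Hab : (sa rho * sb rho) * (sa rho * sb rho) < 1/16).
 { replace ((sa rho * sb rho) * (sa rho * sb rho)) with (alpha rho * beta rho) by (rewrite <- H2, <- H3; ring).
   unfold alpha, beta. assert (rho * (1 - rho) < 1/4) by nra. nra. }
 nra.
Qed.

Lemma ts_nonneg rho : 0 < rho < 1/2 -> 0 <= ts rho.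
Proof. intros H. unfold ts. pose proof (sa_pos rho H). pose proof (sa_lt_sb rho H).
 rewrite <- ln_1. left. apply ln_increasing. lra. apply (Rmult_lt_reg_r (sa rho)); auto. unfold Rdiv.
 rewrite Rmult_assoc, Rinv_l by lra. lra. Qed.

Lemma exp_ts rho : 0 < rho < 1/2 -> exp (ts rho) = sb rho / sa rho.
Proof. intros H. unfold ts. pose proof (sa_pos rho H). pose proof (sa_lt_sb rho H). apply exp_ln.
 unfold Rdiv. apply Rmult_lt_0_compat. lra. apply Rinv_0_lt_compat; lra. Qed.
Lemma exp_mts rho : 0 < rho < 1/2 -> exp (- ts rho) = sa rho / sb rho.
Proof. intros H. rewrite exp_Ropp, exp_ts by auto. pose proof (sa_pos rho H). pose proof (sa_lt_sb rho H). field. lra. Qed.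

Lemma M_at_ts rho : 0 < rho < 1/2 -> alpha rho * exp (ts rho) + 1/2 + beta rho * exp (- ts rho) = Ms rho.
Proof. intros H. rewrite exp_ts, exp_mts by auto. pose proof (sa_pos rho H). pose proof (sa_lt_sb rho H).
 rewrite <- (sa_sq rho H), <- (sb_sq rho H). unfold Ms. field. lra. Qed.

Lemma q_upper rho n : 0 < rho < 1/2 -> qb rho n <= Ms rho ^ n.
Proof.
 intros H. rewrite qb_W. pose proof (ts_nonneg rho H). pose proof (alpha_pos rho H). pose proof (beta_gt rho H).
 apply Rle_trans with (W (alpha rho) (1/2) (beta rho) n (fun y => exp (ts rho * y)) 0).
 - apply W_le; try lra. intros y. unfold g. pose proof (exp_pos (ts rho * y)).
   destruct (Rlt_dec 0 y). rewrite <- exp_0. apply exp_mono. nra.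
   destruct (Req_EM_T y 0). subst. rewrite Rmult_0_r, exp_0. lra. lra.
 - rewrite W_exp, M_at_ts by auto. rewrite Rmult_0_r, exp_0. lra.
Qed.

Lemma W_scal a z b n c phi x : W a z b n (fun y => c * phi y) x = c * W a z b n phi x.
Proof. rewrite (W_ext a z b n _ (fun y => c * phi y + 0 * phi y)) by (intros; ring). rewrite W_lin. ring. Qed.

Definition Kn (n : nat) := 2 * sqrt (INR n) + 1.

Lemma q_lower rho n : 0 < rho < 1/2 -> Ms rho ^ n * exp (- ts rho * Kn n) / 8 <= qb rho n.
Proof.
 intros H. rewrite qb_W. pose proof (ts_nonneg rho H). pose proof (alpha_pos rho H). pose proof (beta_gt rho H).
 pose proof (Ms_bounds rho H). pose proof (sa_pos rho H). pose proof (sa_lt_sb rho H).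
 set (s := sa rho * sb rho / Ms rho).
 rewrite (W_tilt _ _ _ (ts rho) (Ms rho)) by lra.
 replace (alpha rho * exp (ts rho) / Ms rho) with s.
 2:{ unfold s. rewrite exp_ts, <- (sa_sq rho H) by auto. field. lra. }
 replace (beta rho * exp (- ts rho) / Ms rho) with s.
 2:{ unfold s. rewrite exp_mts, <- (sb_sq rho H) by auto. field. lra. }
 replace (1/2 / Ms rho) with (1 - 2 * s).
 2:{ unfold s. unfold Ms in *. field. lra. }
 rewrite Rmult_0_r, exp_0, Rmult_1_r.
 assert (Hs : 0 <= s <= 1/2).
 { unfold s. split. apply Rmult_le_pos. nra. left; apply Rinv_0_lt_compat; lra.
   apply (Rmult_le_reg_r (Ms rho)). lra. unfold Rdiv. rewrite Rmult_assoc, Rinv_l by lra. unfold Ms. lra. }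
 assert (HK : 0 < Kn n) by (unfold Kn; pose proof (sqrt_pos (INR n)); lra).
 assert (Hw := W_win s n (Kn n) Hs HK).
 assert (HnK : INR n / Kn n ^ 2 <= 1/4).
 { unfold Kn. pose proof (sqrt_pos (INR n)). pose proof (sqrt_sqrt (INR n) (pos_INR n)).
   apply (Rmult_le_reg_r ((2 * sqrt (INR n) + 1) ^ 2)). apply pow_lt; lra.
   unfold Rdiv. rewrite Rmult_assoc, Rinv_l by (apply pow_nonzero; lra). nra. }
 assert (Hl : W s (1 - 2 * s) s n (fun y => exp (- ts rho * Kn n) / 2 * win (Kn n) y) 0
          <= W s (1 - 2 * s) s n (fun y => exp (- ts rho * y) * g y) 0).
 { apply W_le; try lra. intros y. unfold win, g. pose proof (exp_pos (- ts rho * Kn n)). pose proof (exp_pos (- ts rho * y)).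
   assert (Hm: 0 <= y -> y <= Kn n -> exp (- ts rho * Kn n) <= exp (- ts rho * y)) by (intros; apply exp_mono; nra).
   destruct (Rle_dec 0 y), (Rle_dec y (Kn n)), (Rlt_dec 0 y), (Req_EM_T y 0); try nra.
 }
 rewrite W_scal in Hl.
 pose proof (exp_pos (- ts rho * Kn n)).
 assert (0 < Ms rho ^ n) by (apply pow_lt; lra).
 assert (exp (- ts rho * Kn n) / 8 <= W s (1 - 2 * s) s n (fun y => exp (- ts rho * y) * g y) 0) by nra.
 unfold Rdiv in *. nra.
Qed.


Lemma Vt_ext q c : forall psi phi, (forall a v, psi a v = phi a v) -> Vt q c psi = Vt q c phi.
Proof. induction c; intros psi phi H; simpl; auto. rewrite (IHc _ (fun a v => phi (S a) v)), (IHc (fun a v => psi a (S v)) (fun a v => phi a (S v))); auto. Qed.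

Lemma Vt_le q c : 0 <= q <= 1 -> forall psi phi, (forall a v, psi a v <= phi a v) -> Vt q c psi <= Vt q c phi.
Proof. intros Hq; induction c; intros psi phi H; simpl; auto.
 assert (H1 := IHc (fun a v => psi (S a) v) (fun a v => phi (S a) v) (fun a v => H (S a) v)).
 assert (H2 := IHc (fun a v => psi a (S v)) (fun a v => phi a (S v)) (fun a v => H a (S v))).
 apply Rplus_le_compat; apply Rmult_le_compat_l; lra. Qed.

Lemma Vt_nonneg q c : 0 <= q <= 1 -> forall psi, (forall a v, 0 <= psi a v) -> 0 <= Vt q c psi.
Proof. intros Hq; induction c; intros psi H; simpl; auto.
 assert (H1 := IHc (fun a v => psi (S a) v) (fun a v => H (S a) v)).
 assert (H2 := IHc (fun a v => psi a (S v)) (fun a v => H a (S v))). nra. Qed.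

Lemma Vt_geom q r s c : forall k, Vt q c (fun a v => k * r ^ v * s ^ a) = k * ((1 - q) * s + q * r) ^ c.
Proof. induction c; intros k; cbn [Vt]. simpl; ring.
 rewrite (Vt_ext q c (fun a v => k * r ^ v * s ^ S a) (fun a v => (k * s) * r ^ v * s ^ a)) by (intros; simpl; ring).
 rewrite (Vt_ext q c (fun a v => k * r ^ S v * s ^ a) (fun a v => (k * r) * r ^ v * s ^ a)) by (intros; simpl; ring).
 rewrite !IHc. simpl. ring. Qed.

Lemma Vt_path q c : 0 <= q <= 1 -> forall psi m, (forall a v, 0 <= psi a v) -> (m <= c)%nat ->
  q ^ m * (1 - q) ^ (c - m) * psi (c - m)%nat m <= Vt q c psi.
Proof.
 intros Hq; induction c; intros psi m Hpos Hm; simpl.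
 - replace m with 0%nat by lia. simpl. lra.
 - assert (N1 := Vt_nonneg q c Hq (fun a v => psi (S a) v) (fun a v => Hpos (S a) v)).
   assert (N2 := Vt_nonneg q c Hq (fun a v => psi a (S v)) (fun a v => Hpos a (S v))).
   destruct m.
   + specialize (IHc (fun a v => psi (S a) v) 0%nat (fun a v => Hpos (S a) v) ltac:(lia)).
     simpl in *. rewrite Nat.sub_0_r in *. nra.
   + specialize (IHc (fun a v => psi a (S v)) m (fun a v => Hpos a (S v)) ltac:(lia)).
     simpl in *. nra.
Qed.

Lemma chi2_nonneg a v : 0 <= chi2 a v.
Proof. unfold chi2. destruct (Nat.ltb a v); [lra|]. destruct (Nat.eqb a v); lra. Qed.

Lemma Vt_upper q c : 0 < q <= 1 -> Vt q c chi2 <= (2 * sqrt q) ^ c.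
Proof.
 intros Hq. set (r := / sqrt q).
 assert (Hsq : 0 < sqrt q) by (apply sqrt_lt_R0; lra).
 assert (Hsq1 : sqrt q <= 1) by (rewrite <- sqrt_1; apply sqrt_le_1_alt; lra).
 assert (Hr : 1 <= r). { unfold r. rewrite <- Rinv_1. apply Rinv_le_contravar; lra. }
 apply Rle_trans with (Vt q c (fun a v => 1 * r ^ v * (/ r) ^ a)).
 - apply Vt_le; [lra|]. intros a v. unfold chi2.
   assert (0 < r ^ v) by (apply pow_lt; lra). assert (0 < r ^ a) by (apply pow_lt; lra).
   rewrite pow_inv.
   assert (0 < / r ^ a) by (apply Rinv_0_lt_compat; lra).
   destruct (Nat.ltb_spec a v).
   + assert (r ^ a <= r ^ v) by (apply Rle_pow; lia || lra).
     assert (1 <= r ^ v * / r ^ a). { apply (Rmult_le_reg_r (r ^ a)); auto. rewrite Rmult_assoc, Rinv_l by lra. lra. }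
     lra.
   + destruct (Nat.eqb_spec a v).
     * subst. rewrite Rmult_1_l, Rinv_r by lra. lra.
     * nra.
 - rewrite Vt_geom. rewrite Rmult_1_l. apply pow_incr. split.
   + apply Rplus_le_le_0_compat; apply Rmult_le_pos; try lra. left; apply Rinv_0_lt_compat; lra.
   + unfold r. rewrite Rinv_inv.
     assert (E: q * / sqrt q = sqrt q). { rewrite <- (sqrt_sqrt q) at 1 by lra. field. lra. }
     rewrite E. nra.
Qed.

Lemma Vt_lower q k : 0 <= q <= 1 -> q ^ (S k) * (1 - q) ^ k <= Vt q (2 * k + 1) chi2.
Proof.
 intros Hq. assert (H := Vt_path q (2*k+1) Hq chi2 (S k) chi2_nonneg ltac:(lia)).
 replace (2 * k + 1 - S k)%nat with k in H by lia.
 replace (chi2 k (S k)) with 1 in H. lra.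
 unfold chi2. destruct (Nat.ltb_spec k (S k)); [auto|lia].
Qed.


Lemma ln_mono x y : 0 < x -> x <= y -> ln x <= ln y.
Proof. intros Hx [H|H]. left; apply ln_increasing; auto. subst; lra. Qed.

Lemma ln_sqrt' q : 0 < q -> ln (sqrt q) = ln q / 2.
Proof. intros Hq. assert (0 < sqrt q) by (apply sqrt_lt_R0; auto).
 rewrite <- (sqrt_sqrt q) at 2 by lra. rewrite ln_mult by auto. field. Qed.

Definition Cst rho := 3 * ts rho + ln 8.

Lemma ln8_pos : 0 < ln 8.
Proof. rewrite <- ln_1. apply ln_increasing; lra. Qed.

Lemma q_pos rho b : 0 < rho < 1/2 -> 0 < qb rho b.
Proof. intros H. eapply Rlt_le_trans; [|apply q_lower; auto].
 pose proof (Ms_bounds rho H). pose proof (exp_pos (- ts rho * Kn b)).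
 assert (0 < Ms rho ^ b) by (apply pow_lt; lra). unfold Rdiv. apply Rmult_lt_0_compat; [nra|lra]. Qed.

Lemma ln_q_upper rho b : 0 < rho < 1/2 -> ln (qb rho b) <= INR b * ln (Ms rho).
Proof. intros H. pose proof (Ms_bounds rho H). rewrite <- ln_pow by lra. apply ln_mono. apply q_pos; auto. apply q_upper; auto. Qed.

Lemma ln_q_lower rho b : 0 < rho < 1/2 -> (1 <= b)%nat ->
  INR b * ln (Ms rho) - Cst rho * sqrt (INR b) <= ln (qb rho b).
Proof.
 intros H Hb. pose proof (Ms_bounds rho H). pose proof (ts_nonneg rho H). pose proof ln8_pos.
 pose proof (exp_pos (- ts rho * Kn b)). assert (0 < Ms rho ^ b) by (apply pow_lt; lra).
 apply Rle_trans with (ln (Ms rho ^ b * exp (- ts rho * Kn b) / 8)).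
 2:{ apply ln_mono. unfold Rdiv. apply Rmult_lt_0_compat; [nra|lra]. apply q_lower; auto. }
 unfold Rdiv. rewrite !ln_mult, ln_pow, ln_exp, ln_Rinv by (try lra; try nra; apply Rinv_0_lt_compat; lra).
 assert (1 <= sqrt (INR b)). { rewrite <- sqrt_1. apply sqrt_le_1_alt. apply (le_INR 1); auto. }
 unfold Cst, Kn. nra.
Qed.

Lemma conv2 (v : nat -> R) (l K1 K2 : R) (cn : nat -> nat) (un : nat -> R) :
  0 <= K1 -> 0 <= K2 -> Un_cv un 0 -> (forall n, 0 <= un n) ->
  (forall M, exists N, forall n, (N <= n)%nat -> (M <= cn n)%nat) -> (forall n, (1 <= cn n)%nat) ->
  (forall n, Rabs (v n - l) <= K1 / INR (cn n) + K2 * sqrt (un n)) -> Un_cv v l.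
Proof.
 intros HK1 HK2 Hu Hu0 Hc Hc1 Hb eps Heps.
 assert (He1 : 0 < eps / (2 * (K1 + 1))) by (apply Rdiv_lt_0_compat; lra).
 destruct (archimed_cor1 _ He1) as [M [HM HM0]].
 destruct (Hc M) as [N1 HN1].
 set (x2 := eps / (2 * (K2 + 1))).
 assert (He2 : 0 < x2) by (apply Rdiv_lt_0_compat; lra).
 destruct (Hu (x2 ^ 2)) as [N2 HN2]. apply pow_lt; lra.
 exists (Nat.max N1 N2). intros n Hn. unfold Rdist. eapply Rle_lt_trans; [apply Hb|].
 assert (HcM : (M <= cn n)%nat) by (apply HN1; lia).
 assert (HMpos : 0 < INR M) by (apply lt_0_INR; lia).
 assert (HcR : INR M <= INR (cn n)) by (apply le_INR; auto).
 assert (Hinv : / INR (cn n) <= / INR M) by (apply Rinv_le_contravar; lra).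
 assert (HinvP : 0 <= / INR (cn n)) by (left; apply Rinv_0_lt_compat; lra).
 assert (T1 : K1 / INR (cn n) < eps / 2).
 { unfold Rdiv at 1. apply Rle_lt_trans with (K1 * (eps / (2 * (K1 + 1)))).
   apply Rmult_le_compat_l; lra.
   unfold Rdiv. rewrite <- Rmult_assoc. apply (Rmult_lt_reg_r (2 * (K1 + 1))). lra.
   rewrite Rmult_assoc, Rinv_l by lra. nra. }
 assert (Hun : un n < x2 ^ 2).
 { specialize (HN2 n ltac:(lia)). unfold Rdist in HN2. rewrite Rminus_0_r, Rabs_right in HN2 by (apply Rle_ge; auto). auto. }
 assert (Hs : sqrt (un n) < x2).
 { rewrite <- (sqrt_pow2 x2) by lra. apply sqrt_lt_1_alt. split; auto. }
 assert (T2 : K2 * sqrt (un n) <= K2 * x2) by (apply Rmult_le_compat_l; lra).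
 assert (T3 : K2 * x2 < eps / 2).
 { unfold x2, Rdiv. rewrite <- Rmult_assoc. apply (Rmult_lt_reg_r (2 * (K2 + 1))). lra.
   rewrite Rmult_assoc, Rinv_l by lra. nra. }
 lra.
Qed.

Lemma div_le_compat x y z : 0 < z -> x <= y -> x / z <= y / z.
Proof. intros. unfold Rdiv. apply Rmult_le_compat_r; auto. left; apply Rinv_0_lt_compat; auto. Qed.

Lemma alg_bound X L Lc l2 Cs K sB :
  L < 0 -> Lc < 0 -> 0 < l2 -> 0 <= Cs -> 0 <= K -> 1 <= sB ->
  X <= (2*K+1) * (l2 + sB*sB * L / 2) ->
  (K+1) * (sB*sB * L - Cs * sB) + K * Lc <= X ->
  Rabs (X / (sB*sB*(2*K+1)) - L/2) <= (- L / 2) / (2*K+1) + (Cs + l2 - Lc) * / sB.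
Proof.
 intros HL HLc Hl2 HCs HK HsB Hup Hlo.
 assert (Hc : 0 < 2*K+1) by lra. assert (HB : 0 < sB*sB*(2*K+1)) by (apply Rmult_lt_0_compat; nra).
 assert (Hi : 0 < / sB) by (apply Rinv_0_lt_compat; lra).
 assert (Hi1 : / sB <= 1) by (rewrite <- Rinv_1; apply Rinv_le_contravar; lra).
 assert (A1 : X / (sB*sB*(2*K+1)) <= L/2 + l2 * (/sB * /sB)).
 { apply Rle_trans with ((2*K+1) * (l2 + sB*sB * L / 2) / (sB*sB*(2*K+1))). apply div_le_compat; auto.
   right. field. lra. }
 assert (A2 : (K+1) * L / (2*K+1) - (K+1)/(2*K+1) * Cs * / sB + K / (2*K+1) * Lc * (/sB * /sB) <= X / (sB*sB*(2*K+1))).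
 { apply Rle_trans with (((K+1) * (sB*sB * L - Cs * sB) + K * Lc) / (sB*sB*(2*K+1))).
   right. field. lra. apply div_le_compat; auto. }
 assert (F1 : (K+1)/(2*K+1) <= 1). { apply (Rmult_le_reg_r (2*K+1)); auto. unfold Rdiv. rewrite Rmult_assoc, Rinv_l by lra. lra. }
 assert (F2 : 0 <= K/(2*K+1) <= 1). { split. apply Rmult_le_pos; auto. left; apply Rinv_0_lt_compat; auto.
   apply (Rmult_le_reg_r (2*K+1)); auto. unfold Rdiv. rewrite Rmult_assoc, Rinv_l by lra. lra. }
 assert (F0 : 0 <= (K+1)/(2*K+1)) by (apply Rmult_le_pos; [lra| left; apply Rinv_0_lt_compat; auto]).
 assert (E1 : (K+1) * L / (2*K+1) = L/2 + L / 2 / (2*K+1)) by (field; lra).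
 assert (Hii : / sB * / sB <= / sB) by nra.
 assert (G1 : (K+1)/(2*K+1) * Cs * / sB <= Cs * / sB).
 { rewrite Rmult_assoc. rewrite <- (Rmult_1_l (Cs * / sB)) at 2. apply Rmult_le_compat_r. apply Rmult_le_pos; lra. lra. }
 assert (G2 : K / (2*K+1) * Lc * (/sB * /sB) >= Lc * / sB).
 { assert (HP : 0 <= /sB * /sB <= / sB) by (split; [apply Rmult_le_pos; lra| auto]).
   set (P := K / (2*K+1) * (/sB * /sB)).
   assert (HP2 : 0 <= P <= / sB).
   { unfold P. split. apply Rmult_le_pos; lra.
     apply Rle_trans with (1 * (/sB * /sB)). apply Rmult_le_compat_r; lra. lra. }
   replace (K / (2*K+1) * Lc * (/sB * /sB)) with (P * Lc) by (unfold P; ring).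
   assert (0 <= (/sB - P) * (- Lc)) by (apply Rmult_le_pos; lra). lra. }
 assert (G3 : 0 <= - L / 2 / (2*K+1)). { unfold Rdiv. apply Rmult_le_pos. lra. left; apply Rinv_0_lt_compat; auto. }
 assert (G4 : L / 2 / (2*K+1) = - (- L / 2 / (2*K+1))) by (field; lra).
 assert (G5 : l2 * (/ sB * / sB) <= l2 * / sB) by (apply Rmult_le_compat_l; lra).
 assert (G6 : (Cs + l2 - Lc) * / sB = Cs * / sB + l2 * / sB - Lc * / sB) by ring.
 assert (G7 : 0 <= Cs * / sB) by (apply Rmult_le_pos; lra). assert (G8 : 0 <= - Lc * / sB) by (apply Rmult_le_pos; lra).
 assert (G9 : 0 <= l2 * / sB) by (apply Rmult_le_pos; lra).
 rewrite G6. rewrite E1 in A2. apply Rabs_le. split; lra.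
Qed.

Lemma part2_bound rho b k : 0 < rho < 1/2 -> (1 <= b)%nat ->
  Rabs (ln (modelA_error rho (b * (2*k+1)) (2*k+1)) / INR (b * (2*k+1)) - ln (Ms rho) / 2)
  <= (- ln (Ms rho) / 2) / INR (2*k+1) + (Cst rho + ln 2 - ln (1 - Ms rho)) * / sqrt (INR b).
Proof.
 intros H Hb. rewrite modelA_Vt by lia.
 pose proof (Ms_bounds rho H) as HM. pose proof (q_pos rho b H) as Hq0. pose proof (q_upper rho b H) as Hq1.
 set (q := qb rho b) in *.
 assert (HMb : Ms rho ^ b <= Ms rho).
 { replace b with (S (b - 1)) by lia. simpl.
   assert (Ms rho ^ (b-1) <= 1) by (rewrite <- (pow1 (b-1)); apply pow_incr; lra).
   assert (0 <= Ms rho ^ (b-1)) by (apply pow_le; lra). nra. }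
 assert (Hq2 : q < 1) by lra.
 set (E := Vt q (2*k+1) chi2).
 assert (Hlow : q ^ S k * (1 - q) ^ k <= E) by (apply Vt_lower; lra).
 assert (Hup : E <= (2 * sqrt q) ^ (2*k+1)) by (apply Vt_upper; lra).
 assert (Hp1 : 0 < q ^ S k * (1 - q) ^ k) by (apply Rmult_lt_0_compat; apply pow_lt; lra).
 assert (HE : 0 < E) by lra.
 assert (Hsq : 0 < sqrt q) by (apply sqrt_lt_R0; lra).
 assert (HX1 : ln E <= INR (2*k+1) * (ln 2 + INR b * ln (Ms rho) / 2)).
 { apply Rle_trans with (ln ((2 * sqrt q) ^ (2*k+1))). apply ln_mono; auto.
   rewrite ln_pow, ln_mult, ln_sqrt' by lra. pose proof (ln_q_upper rho b H). fold q in H0.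
   assert (0 <= INR (2*k+1)) by apply pos_INR. apply Rmult_le_compat_l; lra. }
 assert (HX2 : INR (S k) * (INR b * ln (Ms rho) - Cst rho * sqrt (INR b)) + INR k * ln (1 - Ms rho) <= ln E).
 { apply Rle_trans with (ln (q ^ S k * (1 - q) ^ k)); [|apply ln_mono; auto].
   rewrite ln_mult, !ln_pow by (try apply pow_lt; lra).
   pose proof (ln_q_lower rho b H Hb). fold q in H0.
   assert (ln (1 - Ms rho) <= ln (1 - q)) by (apply ln_mono; lra).
   pose proof (pos_INR k). pose proof (pos_INR (S k)).
   apply Rplus_le_compat; apply Rmult_le_compat_l; lra. }
 assert (HsB : 1 <= sqrt (INR b)). { rewrite <- sqrt_1. apply sqrt_le_1_alt. apply (le_INR 1); auto. }
 assert (HB : INR b = sqrt (INR b) * sqrt (INR b)) by (rewrite sqrt_sqrt; auto; apply pos_INR).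
 set (sB := sqrt (INR b)) in *.
 assert (Hc : INR (2*k+1) = 2 * INR k + 1) by (rewrite plus_INR, mult_INR; simpl; ring).
 rewrite mult_INR, Hc, HB. rewrite Hc, HB in HX1. rewrite S_INR, HB in HX2.
 assert (ln (1 - Ms rho) < 0). { rewrite <- ln_1. apply ln_increasing; lra. }
 assert (ln (Ms rho) < 0). { rewrite <- ln_1. apply ln_increasing; lra. }
 assert (0 < ln 2) by (rewrite <- ln_1; apply ln_increasing; lra).
 assert (0 <= Cst rho) by (unfold Cst; pose proof (ts_nonneg rho H); pose proof ln8_pos; lra).
 apply alg_bound; auto. apply pos_INR.
Qed.


Lemma inf_val rho I : 0 < rho < 1/2 ->
  is_inf (fun x => exists t : R,
           x = ln (rho * (1 - rho) * exp t + 1/2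
                   + 1/2 * (1 - 2 * rho + 2 * rho ^ 2) * exp (- t))) (- I) ->
  - I = ln (Ms rho).
Proof.
 intros H [H1 H2]. apply Rle_antisym.
 - apply H1. exists (ts rho). rewrite <- (M_at_ts rho H). reflexivity.
 - apply H2. intros x [t ->]. apply ln_mono. pose proof (Ms_bounds rho H); lra.
   pose proof (sa_pos rho H) as P1. pose proof (sa_lt_sb rho H) as P2. pose proof (sa_sq rho H) as P3. pose proof (sb_sq rho H) as P4.
   pose proof (exp_pos t) as Hx. rewrite exp_Ropp.
   change (rho * (1 - rho)) with (alpha rho). change (1/2 * (1 - 2 * rho + 2 * rho ^ 2)) with (beta rho).
   rewrite <- P3, <- P4. unfold Ms.
   set (X := exp t) in *.
   assert (0 <= (sa rho * X - sb rho) ^ 2 * / X) by (apply Rmult_le_pos; [apply pow2_ge_0| left; apply Rinv_0_lt_compat; auto]).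
   replace (sa rho * sa rho * X + 1 / 2 + sb rho * sb rho * / X) with (1/2 + 2 * (sa rho * sb rho) + (sa rho * X - sb rho) ^ 2 * / X)
     by (field; lra).
   lra.
Qed.

Lemma mA1 rho d : modelA_error rho d 1 = qb rho d.
Proof. rewrite <- (Nat.mul_1_r d) at 1. rewrite modelA_Vt by lia. simpl. unfold chi2. simpl. ring. Qed.

Lemma inv_INR_cv (f : nat -> nat) : (forall n, (n <= f n)%nat) -> (forall n, (1 <= f n)%nat) -> Un_cv (fun n => / INR (f n)) 0.
Proof.
 intros Hf Hf1 eps Heps. destruct (archimed_cor1 eps Heps) as [N [HN HN0]]. exists N. intros n Hn.
 unfold Rdist. rewrite Rminus_0_r. assert (0 < INR (f n)) by (apply lt_0_INR; specialize (Hf1 n); lia).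
 rewrite Rabs_right by (left; apply Rinv_0_lt_compat; auto).
 apply Rle_lt_trans with (/ INR N); auto. apply Rinv_le_contravar. apply lt_0_INR; lia. apply le_INR. specialize (Hf n); lia.
Qed.

Theorem proposition1 (rho : R) (Hrho : 0 < rho < 1/2) (I : R)
  (HI : is_inf (fun x => exists t : R,
           x = ln (rho * (1 - rho) * exp t + 1/2
                   + 1/2 * (1 - 2 * rho + 2 * rho ^ 2) * exp (- t))) (- I)) :
  0 < I /\
  Un_cv (fun n => ln (modelA_error rho (2 * n + 1) 1) / INR (2 * n + 1)) (- I) /\
  (forall dseq cseq : nat -> nat,
     (forall n, (dseq n < dseq (S n))%nat) ->
     (forall n, Nat.divide (cseq n) (dseq n)) ->
     (forall n, Nat.Odd (cseq n) /\ Nat.Odd (dseq n / cseq n)) ->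
     (forall M, exists N, forall n, (N <= n)%nat -> (M <= cseq n)%nat) ->
     Un_cv (fun n => INR (cseq n) / INR (dseq n)) 0 ->
     Un_cv (fun n => ln (modelA_error rho (dseq n) (cseq n)) / INR (dseq n)) (- I / 2)).
Proof.
 pose proof (inf_val rho I Hrho HI) as HIv.
 pose proof (Ms_bounds rho Hrho) as HM.
 assert (HL : ln (Ms rho) < 0) by (rewrite <- ln_1; apply ln_increasing; lra).
 assert (HC : 0 <= Cst rho) by (unfold Cst; pose proof (ts_nonneg rho Hrho); pose proof ln8_pos; lra).
 split; [lra|]. rewrite HIv. split.
 - apply (conv2 _ _ 0 (Cst rho) (fun n => (2 * n + 1)%nat) (fun n => / INR (2 * n + 1))); auto; try lra.
   + apply inv_INR_cv; intros; lia.
   + intros n. left. apply Rinv_0_lt_compat, lt_0_INR. lia.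
   + intros M. exists M. intros; lia.
   + intros; lia.
   + intros n. rewrite mA1. set (d := (2 * n + 1)%nat).
     assert (Hd : (1 <= d)%nat) by (unfold d; lia).
     pose proof (ln_q_upper rho d Hrho) as U. pose proof (ln_q_lower rho d Hrho Hd) as Lo.
     assert (HdR : 0 < INR d) by (apply lt_0_INR; lia).
     assert (Hs : 0 < sqrt (INR d)) by (apply sqrt_lt_R0; auto).
     assert (Hss : sqrt (INR d) * sqrt (INR d) = INR d) by (apply sqrt_sqrt; lra).
     rewrite sqrt_inv. unfold Rdiv at 2. rewrite Rmult_0_l, Rplus_0_l.
     assert (E1 : ln (qb rho d) / INR d <= ln (Ms rho)).
     { apply (Rmult_le_reg_r (INR d)); auto. unfold Rdiv. rewrite Rmult_assoc, Rinv_l by lra. lra. }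
     assert (E2 : ln (Ms rho) - Cst rho * / sqrt (INR d) <= ln (qb rho d) / INR d).
     { apply (Rmult_le_reg_r (INR d)); auto. unfold Rdiv. rewrite Rmult_assoc, Rinv_l by lra.
       rewrite Rmult_minus_distr_r.
       assert (Hf : forall s, 0 < s -> Cst rho * / s * (s * s) = Cst rho * s) by (intros; field; lra).
       specialize (Hf _ Hs). rewrite Hss in Hf.
       lra. }
     apply Rabs_le. split; lra.
 - intros dseq cseq Hinc Hdiv Hodd Hc Hu.
   replace (ln (Ms rho) / 2) with (ln (Ms rho) / 2) by reflexivity.
   apply (conv2 _ _ (- ln (Ms rho) / 2) (Cst rho + ln 2 - ln (1 - Ms rho)) cseq (fun n => INR (cseq n) / INR (dseq n))); auto.
   + lra.
   + assert (ln (1 - Ms rho) < 0) by (rewrite <- ln_1; apply ln_increasing; lra).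
     assert (0 < ln 2) by (rewrite <- ln_1; apply ln_increasing; lra). lra.
   + intros n. apply Rmult_le_pos. apply pos_INR. destruct (Rle_lt_dec (INR (dseq n)) 0).
     rewrite (Rle_antisym _ _ r (pos_INR _)). rewrite Rinv_0. lra. left; apply Rinv_0_lt_compat; auto.
   + intros n. destruct (Hodd n) as [[m Hm] _]. lia.
   + intros n. destruct (Hodd n) as [[k Hk] [m Hm]]. destruct (Hdiv n) as [b Hb].
     assert (Hc0 : cseq n <> 0%nat) by lia.
     assert (Hbd : (dseq n / cseq n)%nat = b) by (rewrite Hb; apply Nat.div_mul; auto).
     assert (Hb1 : (1 <= b)%nat) by lia.
     rewrite Hb, Hk. pose proof (part2_bound rho b k Hrho Hb1) as P.
     assert (HbR : 0 < INR b) by (apply lt_0_INR; lia).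
     assert (HcR : 0 < INR (2 * k + 1)) by (apply lt_0_INR; lia).
     replace (INR (2 * k + 1) / INR (b * (2 * k + 1))) with (/ INR b).
     2:{ rewrite mult_INR. field. lra. }
     rewrite sqrt_inv. exact P.
Qed.
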